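(* For every integer $m\ge 5$, the independence polynomial $I(T_{m,3};t)$ is unimodal and its mode belongs to $\{\rho_m,\rho_m+1,\rho_m+2\}$, where $\rho_m$ denotes the mode of the independence polynomial $I(C_m;t)$ of the cycle $C_m$.
   Context: For a simple graph $G$, the independence polynomial is $I(G;t)=\sum_{k\ge 0}s_k(G)t^k$, where $s_k(G)$ is the number of independent sets (sets of pairwise non-adjacent vertices) of size $k$ in $G$. $C_m$ is the cycle on $m$ vertices; its independence polynomial is known to be unimodal. For integers $m\ge 3$, $n\ge 1$, the tadpole graph $T_{m,n}$ is the simple graph with vertex set $\{x_1,\dots,x_m,y_1,\dots,y_n\}$ and edges $\{x_i,x_{i+1}\}$ for $1\le i\le m-1$, $\{x_m,x_1\}$, $\{y_j,y_{j+1}\}$ for $1\le j\le n-1$, and $\{x_m,y_1\}$. A polynomial $\sum a_kt^k$ with nonnegative coefficients is unimodal if $a_0\le\cdots\le a_m\ge a_{m+1}\ge\cdots$ for some $m$; with $a_{-1}=0$, its mode is the unique $i$ with $a_{i-1}<a_i\ge a_{i+1}\ge a_{i+2}\ge\cdots$. *)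

(* Defs.v *)
From mathcomp Require Import all_boot.
Set Implicit Arguments. Unset Strict Implicit. Unset Printing Implicit Defensive.

(* Adjacency of the cycle C_m on vertices 0..m-1 (x_{i+1} ~ i). *)
Definition cycle_adj (m a b : nat) : bool :=
  [&& a < m, b < m & (b == (a.+1) %% m) || (a == (b.+1) %% m)].

Definition cycle_graph (m : nat) : rel 'I_m := fun a b => cycle_adj m a b.

(* Tadpole T_{m,n} on vertices 0..m+n-1: x_i |-> i-1, y_j |-> m+j-1.
   Cycle edges among 0..m-1, path edges m-1 -- m -- ... -- m+n-1
   (the edge m-1 -- m is {x_m, y_1}). *)
Definition tadpole_adj (m n a b : nat) : bool :=
  cycle_adj m a b ||
  [&& m.-1 <= a, a < m + n, m.-1 <= b, b < m + n & (b == a.+1) || (a == b.+1)].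

Definition tadpole_graph (m n : nat) : rel 'I_(m + n) :=
  fun a b => tadpole_adj m n a b.

Definition independent (V : finType) (e : rel V) (A : {set V}) : bool :=
  [forall x in A, forall y in A, ~~ e x y].

Definition indep_coef (V : finType) (e : rel V) (k : nat) : nat :=
  #|[set A : {set V} | independent e A && (#|A| == k)]|.

Definition unimodal (a : nat -> nat) : Prop :=
  exists k, (forall i, i < k -> a i <= a i.+1) /\ (forall i, k <= i -> a i.+1 <= a i).

(* a_{-1} = 0 convention *)
Definition prev_coef (a : nat -> nat) (i : nat) : nat :=
  if i is j.+1 then a j else 0.

Definition is_mode (a : nat -> nat) (i : nat) : Prop :=
  prev_coef a i < a i /\ (forall j, i <= j -> a j.+1 <= a j).

Arguments cycle_graph m : clear implicits.
Arguments tadpole_graph m n : clear implicits.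

(* Main.v *)
Require Import Defs.
From mathcomp Require Import all_boot all_algebra.
From mathcomp Require Import zify ring.
Set Warnings "-notation-overridden -ambiguous-paths".
Set Implicit Arguments. Unset Strict Implicit.

Definition A (m j : nat) := (m.+2 - 2*j) * (m.+1 - 2*j).
Definition B (m j : nat) := j * (m - j).

Lemma Rp n i : 'C(n - i.+1, i.+1) * (i.+1 * (n - i)) = 'C(n - i, i) * A n i.+1.
Proof.
rewrite /A.
case: (ltnP i n) => hin.
- set N := n - i.+1.
  have hN : n - i = N.+1 by rewrite /N; lia.
  rewrite hN.
  have e1 := mul_bin_left N i.
  have e2 := mul_bin_down N.+1 i. rewrite /= in e2.
  have -> : n.+2 - 2 * i.+1 = N.+1 - i by rewrite /N; lia.
  have -> : n.+1 - 2 * i.+1 = N - i by rewrite /N; lia.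
  rewrite mulnA (mulnC _ i.+1) e1 -mulnA (mulnC _ N.+1) e2.
  lia.
- have -> : n - i.+1 = 0 by lia.
  have -> : n.+2 - 2 * i.+1 = 0 by lia.
  by rewrite bin0n !muln0.
Qed.

Definition pp m j := 'C(m - j, j).
Definition rr m j := if j is j'.+1 then 'C(m - j'.+2, j') else 0.
Definition cc m j := pp m j + rr m j.

Lemma Rp' m i : pp m i.+1 * (i.+1 * (m - i)) = pp m i * A m i.+1.
Proof. exact: Rp. Qed.

Lemma rr_pp m j : j < m -> rr m j * (m - j) = j * pp m j.
Proof.
case: j => [|i] hi; first by rewrite /= mul0n.
rewrite /rr /pp.
have := mul_bin_diag (m - i.+1) i.
have -> : (m - i.+1).-1 = m - i.+2 by lia.
lia.
Qed.

Lemma cc_pp m j : j < m -> cc m j * (m - j) = m * pp m j.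
Proof.
move=> hj; rewrite /cc mulnDl rr_pp //.
have -> : m = (m - j) + j by lia.
rewrite -addnBA // subnn addn0 mulnDl; lia.
Qed.

Lemma Rc m i : i.+1 < m -> cc m i.+1 * B m i.+1 = cc m i * A m i.+1.
Proof.
move=> hi.
have h1 := cc_pp (ltnW hi).
have h2 := cc_pp hi.
have h3 := Rp' m i.
rewrite /B.
have hD : m - i = (m - i.+1).+1 by lia.
rewrite hD in h1 h3.
move: h1 h2 h3.
generalize (cc m i.+1) (cc m i) (pp m i.+1) (pp m i) (A m i.+1) (m - i.+1) => X Y P1 P0 Am D h1 h2 h3.
apply/eqP; rewrite -(@eqn_pmul2r D.+1) //; apply/eqP.
have -> : X * (i.+1 * D) * D.+1 = (X * D) * (i.+1 * D.+1) by nia.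
rewrite h2.
have -> : Y * Am * D.+1 = Y * D.+1 * Am by nia.
rewrite h1. nia.
Qed.

Lemma P_i1 a : (a-2)*(a-3)*((a+2)*(a+1)) <= (a*(a-1))*(a*(a-1)).
Proof.
case: (leqP a 2) => ha.
  have -> : a - 2 = 0 by lia. by rewrite !mul0n.
have e1 : (a-2)*(a+1) <= a*(a-1) by nia.
have e2 : (a-3)*(a+2) <= a*(a-1) by nia.
have := leq_mul e1 e2.
have -> : (a - 2) * (a + 1) * ((a - 3) * (a + 2)) = (a-2)*(a-3)*((a+2)*(a+1)) by ring.
done.
Qed.

Lemma P_i2 y a : a*(a-1) <= (y+2)*(y+a) ->
  ((y+2)*(y+a))*((y+2)*(y+a)) <= (y+1)*(y+3)*((y+a+1)*(y+a+2)).
Proof.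
move=> h.
have ha : a <= 2*y+3.
  case: (leqP a (2*y+3)) => // hc.
  have : a*(2*y+3) <= a*(a-1) by apply: leq_mul; lia.
  nia.
set s := y + a.
have hs : s*s <= s*(3*y+3) by apply: leq_mul; lia.
have e1 : (y+2)*(y+2) = (y+1)*(y+3) + 1 by ring.
nia.
Qed.

Lemma P_i y a : a*(a-1) <= (y+2)*(y+a) ->
  (a-2)*(a-3)*(a*(a-1))*((a+2)*(a+1)) <=
  ((y+3)*(y+a))*((y+2)*(y+a+1))*((y+1)*(y+a+2)).
Proof.
move=> h.
have h1 := P_i1 a.
have h2 := P_i2 h.
have -> : (y + 3) * (y + a) * ((y + 2) * (y + a + 1)) * ((y + 1) * (y + a + 2))
   = ((y+2)*(y+a)) * ((y+1)*(y+3)*((y+a+1)*(y+a+2))) by ring.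
move: h h1 h2.
set Y := a*(a-1). set Z := (y+2)*(y+a). set W := (y+1)*(y+3)*((y+a+1)*(y+a+2)).
move=> h h1 h2.
have -> : (a-2)*(a-3)*Y*((a+2)*(a+1)) = ((a-2)*(a-3)*((a+2)*(a+1))) * Y by ring.
apply: leq_trans (leq_mul h1 (leqnn Y)) _.
apply: leq_trans (leq_mul (leq_mul h h) h) _.
rewrite mulnC; apply: leq_mul => //.
Qed.

Lemma P_ii y a : a*(a-1) <= (y+2)*(y+a) -> (y+1)*(y+1+a) < (a+2)*(a+1) ->
  (a-2)*(a-3)*(a*(a-1)) <= ((y+2)*(y+a-1))*((y+1)*(y+a)).
Proof.
move=> h1 h0.
have h2 : (a-2)*(a-3) <= (y+1)*(y+a-1).
  case: (leqP a 3) => ha.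
    have -> : a - 3 = 0 by lia. by rewrite muln0.
  have h5 : 2*y + 7 <= 3*a.
    case: (leqP (2*y+7) (3*a)) => // hc.
    have : (a+2)*(a+1) <= (y+1)*(y+1+a) by nia.
    lia.
  move: h1 h5; clear h0.
  case: a ha => // b hb.
  have -> : b.+1 - 2 = b - 1 by lia.
  have -> : b.+1 - 3 = b - 2 by lia.
  have -> : b.+1 - 1 = b by lia.
  have -> : y + b.+1 - 1 = y + b by lia.
  move=> h1 h5.
  case: b hb h1 h5 => // b hb.
  have -> : b.+1 - 1 = b by lia.
  have -> : b.+1 - 2 = b - 1 by lia.
  nia.
have := leq_mul h2 h1.
move=> hh; apply: (leq_trans hh).
apply: eq_leq; ring.
Qed.

Lemma P_M3 J d a : 0 < d -> (J+d)*(J+d+a) < (a+2)*(a+1) ->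
  J*(J+2*d+a+1) <= (a+2*d+2)*(a+2*d+1).
Proof.
move=> hd h.
have hJ : J <= a + 1.
  case: (leqP J (a+1)) => // hJ.
  have : (a+2)*(a+1) <= (J+d)*(J+d+a) by apply: leq_mul; lia.
  lia.
have e : (a+2*d+2)*(a+2*d+1) = (a+2)*(a+1) + 2*d*(2*a+3) + 4*d*d by ring.
rewrite e.
have : J*(J+a) <= (J+d)*(J+d+a) by apply: leq_mul; lia.
have : J*(2*d+1) <= (a+1)*(2*d+1) by apply: leq_mul.
have -> : J*(J+2*d+a+1) = J*(J+a) + J*(2*d+1) by ring.
nia.
Qed.

Lemma Rr m i : 2 <= m -> rr m i.+2 * (i.+1 * (m - i.+2)) = rr m i.+1 * A m i.+2.
Proof.
move=> hm.
have := Rp (m - 2) i.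
have -> : m - 2 - i.+1 = m - i.+3 by lia.
have -> : m - 2 - i = m - i.+2 by lia.
have -> : A (m - 2) i.+1 = A m i.+2 by rewrite /A; congr (_ * _); lia.
by rewrite /rr.
Qed.

Lemma chain3 a0 a1 a2 a3 k1 k2 k3 e1 e2 e3 :
  a1 * k1 = a0 * e1 -> a2 * k2 = a1 * e2 -> a3 * k3 = a2 * e3 ->
  a3 * (k3 * k2 * k1) = a0 * (e3 * e2 * e1).
Proof.
move=> h1 h2 h3.
have -> : a3 * (k3 * k2 * k1) = (a3 * k3) * k2 * k1 by ring.
rewrite h3.
have -> : a2 * e3 * k2 * k1 = (a2 * k2) * e3 * k1 by ring.
rewrite h2.
have -> : a1 * e2 * e3 * k1 = (a1 * k1) * e2 * e3 by ring.
rewrite h1; ring.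
Qed.

Lemma chain2 a0 a1 a2 k1 k2 e1 e2 :
  a1 * k1 = a0 * e1 -> a2 * k2 = a1 * e2 -> a2 * (k2 * k1) = a0 * (e2 * e1).
Proof.
move=> h1 h2.
have -> : a2 * (k2 * k1) = (a2 * k2) * k1 by ring.
rewrite h2.
have -> : a1 * e2 * k1 = (a1 * k1) * e2 by ring.
rewrite h1; ring.
Qed.

Lemma cancel_le u v K E : 0 < K -> u * K = v * E -> E <= K -> u <= v.
Proof.
move=> hK h hE.
rewrite -(leq_pmul2r hK) h; exact: leq_mul.
Qed.

Lemma cancel_ge u v K E : 0 < K -> u * K = v * E -> K <= E -> v <= u.
Proof.
move=> hK h hE.
rewrite -(leq_pmul2r hK) h; exact: leq_mul.
Qed.

Lemma B_mono m J x : 0 < J <= x -> 2 * x <= m -> B m J <= B m x.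
Proof.
move=> /andP[h0 h1] h2; rewrite /B.
have [d hd] : exists d, x = J + d by exists (x - J); lia.
subst x.
have [a ha] : exists a, m = 2 * (J + d) + a by exists (m - 2 * (J + d)); lia.
subst m.
have -> : 2 * (J + d) + a - J = J + 2*d + a by lia.
have -> : 2 * (J + d) + a - (J + d) = J + d + a by lia.
nia.
Qed.

Lemma A_mono m J x : J <= x -> A m x <= A m J.
Proof.
move=> h; rewrite /A; apply: leq_mul; apply: leq_sub2l; lia.
Qed.

Lemma pp_big m j : m <= j.+1 -> pp m j.+1 = 0.
Proof. move=> h; rewrite /pp; have -> : m - j.+1 = 0 by lia. by rewrite bin0n. Qed.

Lemma rr_big m j : 2 <= m -> m <= j.+1 -> rr m j.+1 = 0.
Proof. move=> h1 h; rewrite /rr; have -> : m - j.+2 = 0 by lia. rewrite bin0n; case: j h => //=; lia. Qed.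

Lemma analytic m : 5 <= m -> exists x,
  [/\ 0 < x, cc m x.-1 < cc m x,
   (forall j, j < x -> cc m j <= cc m j.+1) /\
   (forall j, x <= j -> cc m j.+1 <= cc m j),
   (forall j, j.+2 <= x -> pp m j <= pp m j.+1) /\
   (forall j, x <= j -> pp m j.+1 <= pp m j) &
   cc m x.+2 + cc m x.+1 + pp m x.+1 <= 2 * cc m x + pp m x.-1].
Proof.
move=> hm.
pose P j := (0 < j < m) && (B m j < A m j).
have exP : exists j, P j.
  exists 1; rewrite /P /B /A; apply/andP; split; first lia.
  have -> : m.+2 - 2 * 1 = m by lia.
  have -> : m.+1 - 2 * 1 = m - 1 by lia.
  rewrite mul1n; apply: ltn_Pmull; lia.
have ubP : forall j, P j -> j <= m by move=> j /andP[/andP[_ /ltnW]].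
case: (ex_maxnP exP ubP) => x /andP[/andP[hx0 hxm] H0] hmax.
have h2x : 2 * x <= m.
  case: (leqP (2 * x) m) => // hc.
  move: H0; rewrite /A; have -> : m.+1 - 2 * x = 0 by lia. by rewrite muln0.
have hx1m : x.+1 < m by lia.
have H1 : A m x.+1 <= B m x.+1.
  rewrite leqNgt; apply/negP => hc.
  have : P x.+1 by rewrite /P hc; apply/andP; split => //; lia.
  move/hmax; lia.
have Bpos : forall j, 0 < j < m -> 0 < B m j.
  move=> j /andP[h1 h2]; rewrite /B muln_gt0; apply/andP; split; lia.
have cup : forall j, j < x -> cc m j <= cc m j.+1.
  move=> j hj.
  have hB : B m j.+1 < A m j.+1.
    apply: leq_ltn_trans (B_mono (J:=j.+1) _ h2x) _; first by apply/andP; split.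
    apply: leq_trans H0 (A_mono _ _); lia.
  apply: (cancel_ge (K := B m j.+1) (E := A m j.+1)).
  - apply: Bpos; lia.
  - apply: Rc; lia.
  - exact: ltnW.
have cstrict : cc m x.-1 < cc m x.
  have hpos : 0 < cc m x.-1.
    rewrite /cc /pp; apply: ltn_addr; rewrite bin_gt0; lia.
  have e := Rc (i := x.-1) (m := m). rewrite prednK // in e.
  have e' := e hxm.
  rewrite -(ltn_pmul2r (Bpos x _)); last lia.
  rewrite e' ltn_pmul2l //.
have cdown : forall j, x <= j -> cc m j.+1 <= cc m j.
  move=> j hj.
  case: (ltnP j.+1 m) => hjm.
  - have hA : A m j.+1 <= B m j.+1.
      rewrite leqNgt; apply/negP => hc.
      have : P j.+1 by rewrite /P hc; apply/andP; split => //.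
      move/hmax; lia.
    apply: (cancel_le (K := B m j.+1) (E := A m j.+1)) => //.
    + apply: Bpos; lia.
    + apply: Rc; lia.
  - by rewrite /cc pp_big // rr_big //; lia.
have pup : forall j, j.+2 <= x -> pp m j <= pp m j.+1.
  move=> j hj.
  apply: (cancel_ge (K := j.+1 * (m - j)) (E := A m j.+1)).
  - rewrite muln_gt0; apply/andP; split; lia.
  - exact: Rp'.
  - have [d hd] : exists d, x = j.+1 + d.+1 by exists (x - j.+2); lia.
    have [a ha] : exists a, m = 2 * x + a by exists (m - 2 * x); lia.
    have eH : (j.+1 + d.+1)*(j.+1 + d.+1 + a) < (a+2)*(a+1).
      have e1 : B m x = (j.+1 + d.+1)*(j.+1 + d.+1 + a) by rewrite /B ha hd; congr (_ * _); lia.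
      have e2 : A m x = (a+2)*(a+1) by rewrite /A ha hd; congr (_ * _); lia.
      by rewrite -e1 -e2.
    have -> : m - j = j.+1 + 2 * d.+1 + a + 1 by lia.
    have -> : A m j.+1 = (a + 2 * d.+1 + 2) * (a + 2 * d.+1 + 1) by rewrite /A ha hd; congr (_ * _); lia.
    by apply: P_M3.
have pdown : forall j, x <= j -> pp m j.+1 <= pp m j.
  move=> j hj.
  case: (ltnP j.+1 m) => hjm.
  - have hA : A m j.+1 <= B m j.+1.
      rewrite leqNgt; apply/negP => hc.
      have : P j.+1 by rewrite /P hc; apply/andP; split => //.
      move/hmax; lia.
    apply: (cancel_le (K := j.+1 * (m - j)) (E := A m j.+1)).
    + rewrite muln_gt0; apply/andP; split; lia.
    + exact: Rp'.
    + apply: leq_trans hA _; rewrite /B leq_mul2l; apply/orP; right; lia.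
  - by rewrite pp_big.
exists x; split => //.
have [y hy] : exists y, x = y.+1 by exists x.-1; lia.
subst x.
have [a ha] : exists a, m = 2 * y.+1 + a by exists (m - 2 * y.+1); lia.
have eA1 : A m y.+1 = (a+2)*(a+1) by rewrite /A ha; congr (_ * _); lia.
have eA2 : A m y.+2 = a*(a-1) by rewrite /A ha; congr (_ * _); lia.
have eA3 : A m y.+3 = (a-2)*(a-3) by rewrite /A ha; congr (_ * _); lia.
have eB0 : B m y.+1 = (y+1)*(y+1+a) by rewrite /B ha; congr (_ * _); lia.
have eB1 : B m y.+2 = (y+2)*(y+a) by rewrite /B ha; congr (_ * _); lia.
have Hi : pp m y.+3 <= pp m y.
  have e1 := Rp' m y. have e2 := Rp' m y.+1. have e3 := Rp' m y.+2.
  have := chain3 e1 e2 e3.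
  rewrite eA1 eA2 eA3 => e.
  apply: (cancel_le _ e).
  - rewrite !muln_gt0; apply/andP; split; [apply/andP; split|]; apply/andP; split; lia.
  - move: H1; rewrite eA2 eB1 => H1.
    have := P_i H1.
    rewrite ha.
    have -> : 2 * y.+1 + a - y.+2 = y + a by lia.
    have -> : 2 * y.+1 + a - y.+1 = y + a + 1 by lia.
    have -> : 2 * y.+1 + a - y = y + a + 2 by lia.
    have -> : y.+3 = y + 3 by lia.
    have -> : y.+2 = y + 2 by lia.
    have -> : y.+1 = y + 1 by lia.
    done.
have Hii : rr m y.+3 <= rr m y.+1.
  have e1 := Rr y (ltnW (ltnW (ltnW hm))).
  have e2 := Rr y.+1 (ltnW (ltnW (ltnW hm))).
  have := chain2 e1 e2.
  rewrite eA2 eA3 => e.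
  apply: (cancel_le _ e).
  - rewrite !muln_gt0; apply/andP; split; apply/andP; split; lia.
  - move: H1 H0; rewrite eA2 eB1 eA1 eB0 => H1 H0.
    have := P_ii H1 H0.
    rewrite ha.
    have -> : 2 * y.+1 + a - y.+3 = y + a - 1 by lia.
    have -> : 2 * y.+1 + a - y.+2 = y + a by lia.
    have -> : y.+2 = y + 2 by lia.
    have -> : y.+1 = y + 1 by lia.
    done.
have Hc1 := cdown y.+1 (leqnn _).
have Hp1 := pdown y.+1 (leqnn _).
change (y.+1.-1) with y. move: Hi Hii Hc1 Hp1; rewrite /cc; lia.
Qed.


Fixpoint nc (s : seq bool) : bool :=
  if s is x :: t then (if t is y :: _ then ~~ (x && y) else true) && nc t else true.

Fixpoint allbits (n : nat) : seq (seq bool) :=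
  if n is n'.+1 then map (cons false) (allbits n') ++ map (cons true) (allbits n')
  else [:: [::]].

Lemma mem_allbits n s : (s \in allbits n) = (size s == n).
Proof.
elim: n s => [|n IH] s.
  by case: s.
rewrite /= mem_cat.
case: s => [|x s].
  by apply/negbTE; rewrite negb_or; apply/andP; split; apply/mapP => -[t _].
rewrite /= eqSS -IH.
case: x.
- have -> : (true :: s \in map (cons false) (allbits n)) = false.
    by apply/negbTE/mapP => -[t _].
  by rewrite /= (mem_map (f := cons true)) //; move=> a b [].
- have -> : (false :: s \in map (cons true) (allbits n)) = false.
    by apply/negbTE/mapP => -[t _].
  by rewrite orbF (mem_map (f := cons false)) //; move=> a b [].
Qed.

Lemma uniq_allbits n : uniq (allbits n).
Proof.
elim: n => [|n IH] //=.
rewrite cat_uniq !map_inj_uniq ?IH; try by move=> a b [].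
rewrite andbT /=; apply/hasPn => s /mapP [t _ ->].
by apply/mapP => -[u _].
Qed.

Lemma count_allbitsS (P : pred (seq bool)) n :
  count P (allbits n.+1) = count (fun s => P (false :: s)) (allbits n)
                         + count (fun s => P (true :: s)) (allbits n).
Proof. by rewrite /= count_cat !count_map. Qed.

Lemma count_allbits_rev (P : pred (seq bool)) n :
  count P (allbits n) = count (fun s => P (rev s)) (allbits n).
Proof.
have h : perm_eq (allbits n) (map rev (allbits n)).
  apply: uniq_perm; rewrite ?map_inj_uniq ?uniq_allbits //; first exact: (can_inj (@revK bool)).
  move=> s; rewrite mem_allbits.
  apply/idP/mapP => [hs|[t ht ->]].
  - exists (rev s); by rewrite ?revK // mem_allbits size_rev.
  - by rewrite size_rev -mem_allbits.
by rewrite (permP h) count_map.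
Qed.

Lemma count_allbits_cat (P : pred (seq bool)) a b :
  count P (allbits (a + b)) = \sum_(s <- allbits a) count (fun t => P (s ++ t)) (allbits b).
Proof.
elim: a P => [|a IH] P; first by rewrite add0n /= big_seq1.
rewrite addSn count_allbitsS !IH /= big_cat !big_map.
done.
Qed.

Lemma nc_cons x t : nc (x :: t) = ~~ (x && head false t) && nc t.
Proof. by case: t => [|y t] //=; rewrite andbF. Qed.

Lemma nc_cat s t : nc (s ++ t) = [&& nc s, nc t & ~~ (last false s && head false t)].
Proof.
elim: s => [|x s IH]; first by rewrite /= andbT.
rewrite cat_cons !nc_cons IH.
case: s {IH} => [|y s] /=.
- by case: x; case: (nc t); case: (head false t).
- by rewrite !andbA.
Qed.

Lemma last_rev (s : seq bool) : last false (rev s) = head false s.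
Proof. by case: s => [|x s] //; rewrite rev_cons last_rcons. Qed.

Lemma head_rev (s : seq bool) : head false (rev s) = last false s.
Proof. by rewrite -{2}(revK s) last_rev. Qed.

Lemma nc_rev s : nc (rev s) = nc s.
Proof.
elim: s => [|x s IH] //.
rewrite rev_cons -cats1 nc_cat IH last_rev (nc_cons x s) /=.
by case: x; case: (nc s); case: (head false s).
Qed.

Definition N n k := count (fun s => nc s && (count id s == k)) (allbits n).

Lemma N_rec n k : N n.+2 k.+1 = N n.+1 k.+1 + N n k.
Proof.
rewrite /N count_allbitsS; congr (_ + _).
  by apply: eq_count => s; rewrite nc_cons.
rewrite count_allbitsS.
have -> : count (fun s => nc [:: true, true & s] && (count id [:: true, true & s] == k.+1)) (allbits n) = 0.
  by apply/eqP; rewrite -leqn0 leqNgt -has_count; apply/hasPn => s _ /=.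
rewrite addn0; apply: eq_count => s /=.
by rewrite -/(nc (false :: s)) nc_cons /= add1n eqSS.
Qed.

Lemma N0 p : N p 0 = 1.
Proof.
elim: p => [|p IH] //.
rewrite /N count_allbitsS -[RHS]addn0 -IH /N; congr (_ + _).
  by apply: eq_count => s; rewrite nc_cons.
apply/eqP; rewrite -leqn0 leqNgt -has_count; apply/hasPn => s _ /=.
by rewrite add1n andbF.
Qed.

Lemma N_bin n k : N n k = 'C(n.+1 - k, k).
Proof.
elim/ltn_ind: n k => n IH k.
case: k => [|k]; first by rewrite N0 bin0.
case: n IH => [|[|n]] IH.
- by rewrite /N /= ?bin0n.
- by case: k => [|k].
- rewrite N_rec !IH //.
  case: (leqP k n.+1) => hk.
  * have -> : n.+3 - k.+1 = (n.+2 - k.+1).+1 by lia.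
    by rewrite binS; congr (_ + _); congr 'C(_, _); lia.
  * rewrite !bin_small //; lia.
Qed.


Lemma inner3 (c b : bool) (K k : nat) :
  count (fun t => [&& c, nc t, ~~ (b && head false t) & (K + count id t == k)]) (allbits 3)
  = (c && (K == k)) + 2 * (c && (K.+1 == k)) + (c && ~~ b && (K.+1 == k)) + (c && ~~ b && (K.+2 == k)).
Proof.
rewrite /=.
rewrite !add0n !addn0 !addn1 addn2 !andbF !andbT /=.
case: c; case: b => /=; ring.
Qed.

Definition cyc (s : seq bool) := nc s && ~~ (head false s && last false s).

Lemma cyc_rev s : cyc (rev s) = cyc s.
Proof. by rewrite /cyc nc_rev head_rev last_rev; case: (head false s); case: (last false s); rewrite ?andbF ?andbT. Qed.

Lemma Cn_count n j :
  count (fun s => cyc s && ~~ last false s && (count id s == j)) (allbits n.+1) = N n j.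
Proof.
rewrite count_allbits_rev.
rewrite (eq_count (a2 := fun s => cyc s && ~~ head false s && (count id s == j))); last first.
  by move=> s /=; rewrite cyc_rev last_rev count_rev.
rewrite count_allbitsS /=.
rewrite [X in _ + X = _](eq_count (a2 := pred0)); last by move=> s /=; rewrite andbF.
rewrite count_pred0 addn0 /N; apply: eq_count => s.
by rewrite /cyc nc_cons /= !andbT add0n.
Qed.

Lemma ncl_cyc s : cyc s && ~~ last false s = nc s && ~~ last false s.
Proof. by rewrite /cyc; case: (last false s); rewrite ?andbF ?andbT. Qed.

Lemma C_count n j :
  count (fun s => cyc s && (count id s == j)) (allbits n.+3)
  = N n.+2 j + (if j is j'.+1 then N n j' else 0).
Proof.
rewrite count_allbitsS; congr (_ + _).
  by apply: eq_count => s; rewrite /cyc nc_cons /= andbT add0n.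
rewrite count_allbitsS.
rewrite [X in _ + X = _](eq_count (a2 := fun s => false)); last first.
  by move=> s /=.
rewrite count_pred0 addn0.
case: j => [|j].
  by apply/eqP; rewrite -leqn0 leqNgt -has_count; apply/hasPn => s _ /=; rewrite add1n andbF.
rewrite -(Cn_count n j); apply: eq_count => s.
rewrite ncl_cyc /cyc /= add1n add0n eqSS.
by case: s.
Qed.

Lemma sum_count (T : Type) (r : seq T) (b : pred T) : \sum_(s <- r) (b s : nat) = count b r.
Proof. by elim: r => [|x r IH]; rewrite ?big_nil ?big_cons //= IH. Qed.

Lemma sum_count2 (T : Type) (r : seq T) (b : pred T) : \sum_(s <- r) 2 * (b s : nat) = 2 * count b r.
Proof. by elim: r => [|x r IH]; rewrite ?big_nil ?big_cons //= IH mulnDr. Qed.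

Lemma sum4 (T : Type) (r : seq T) (b1 b2 b3 b4 : pred T) :
  \sum_(s <- r) ((b1 s : nat) + 2 * b2 s + b3 s + b4 s)
  = count b1 r + 2 * count b2 r + count b3 r + count b4 r.
Proof. elim: r => [|x r IH]; rewrite ?big_nil ?big_cons //= IH; lia. Qed.

Lemma T_count n k :
  count (fun s => nc s && ~~ (nth false s 0 && nth false s n.+2) && (count id s == k)) (allbits (n.+3 + 3))
  = count (fun s => cyc s && (count id s == k)) (allbits n.+3)
    + 2 * count (fun s => cyc s && ((count id s).+1 == k)) (allbits n.+3)
    + count (fun s => cyc s && ~~ last false s && ((count id s).+1 == k)) (allbits n.+3)
    + count (fun s => cyc s && ~~ last false s && ((count id s).+2 == k)) (allbits n.+3).
Proof.
rewrite count_allbits_cat.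
rewrite (eq_big_seq (fun s => (cyc s && (count id s == k)) + 2 * (cyc s && ((count id s).+1 == k))
   + (cyc s && ~~ last false s && ((count id s).+1 == k)) + (cyc s && ~~ last false s && ((count id s).+2 == k)))).
  by rewrite (sum4 _ (fun s => cyc s && (count id s == k)) (fun s => cyc s && ((count id s).+1 == k)) (fun s => cyc s && ~~ last false s && ((count id s).+1 == k)) (fun s => cyc s && ~~ last false s && ((count id s).+2 == k))).
move=> s; rewrite mem_allbits => /eqP hs.
rewrite -inner3; apply: eq_count => t.
rewrite nc_cat count_cat !nth_cat hs /= nth0.
have -> : nth false s n.+2 = last false s by rewrite -nth_last hs.
rewrite /cyc.
rewrite ltnSn.
by case: (nc s); case: (nc t); case: (head false s); case: (last false s); case: (head false t).
Qed.


Definition bits L (A : {set 'I_L}) : seq bool := [seq i \in A | i <- enum 'I_L].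

Lemma size_bits L (A : {set 'I_L}) : size (bits A) = L.
Proof. by rewrite size_map size_enum_ord. Qed.

Lemma nth_bits L (A : {set 'I_L}) (i : 'I_L) : nth false (bits A) i = (i \in A).
Proof. by rewrite (nth_map i) ?size_enum_ord // nth_ord_enum. Qed.

Lemma nth_true_lt (s : seq bool) j : nth false s j -> j < size s.
Proof. by move=> h; rewrite ltnNge; apply/negP => hc; rewrite nth_default in h. Qed.

Lemma card_bits L (A : {set 'I_L}) : #|A| = count id (bits A).
Proof. rewrite count_map cardE /enum_mem size_filter count_filter; apply: eq_count => i; by rewrite /= andbT. Qed.

Lemma bits_inj L : injective (@bits L).
Proof.
move=> A B h; apply/setP => i; by rewrite -!nth_bits h.
Qed.

Lemma card_set_bits L (Q : pred (seq bool)) :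
  #|[set A : {set 'I_L} | Q (bits A)]| = count Q (allbits L).
Proof.
rewrite cardE /enum_mem size_filter.
rewrite (eq_count (a2 := fun A => Q (bits A))); last by move=> A; rewrite /= inE.
rewrite -enumT -count_map.
apply/permP; apply: uniq_perm.
- by rewrite map_inj_uniq ?enum_uniq //; exact: bits_inj.
- exact: uniq_allbits.
move=> s; rewrite mem_allbits; apply/mapP/idP => [[A _ ->]|/eqP hs].
  by rewrite size_bits.
exists [set i : 'I_L | nth false s i]; first by rewrite mem_enum.
apply: (@eq_from_nth _ false); first by rewrite size_bits.
move=> j; rewrite hs => hj.
by rewrite (nth_bits _ (Ordinal hj)) inE.
Qed.

Lemma nc_nth s : nc s <-> (forall i, ~~ (nth false s i && nth false s i.+1)).
Proof.
elim: s => [|x t IH]; first by split => // _ i; rewrite nth_nil.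
rewrite nc_cons; split.
- move/andP => [h1 /IH h2] [|i] /=; first by rewrite nth0.
  exact: h2.
- move=> h; apply/andP; split; first by have := h 0; rewrite /= nth0.
  by apply/IH => i; exact: h i.+1.
Qed.

Lemma indep_iff L (adj : nat -> nat -> bool) (A : {set 'I_L}) :
  independent (fun a b : 'I_L => adj a b) A <->
  (forall i j, nth false (bits A) i -> nth false (bits A) j -> ~~ adj i j).
Proof.
split.
- move=> /forall_inP h i j hi hj.
  have hi' := nth_true_lt hi; have hj' := nth_true_lt hj.
  rewrite size_bits in hi' hj'.
  move: hi hj; rewrite (nth_bits _ (Ordinal hi')) (nth_bits _ (Ordinal hj')) => hi hj.
  exact: (forall_inP (h _ hi) _ hj).
- move=> h; apply/forall_inP => x xA; apply/forall_inP => y yA.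
  by apply: h; rewrite nth_bits.
Qed.

Lemma struct_iff L w (adj : nat -> nat -> bool) (s : seq bool) :
  size s = L -> 0 < w < L ->
  (forall i j, adj i j -> [|| j == i.+1, i == j.+1, (i == 0) && (j == w) | (i == w) && (j == 0)]) ->
  (forall i, i.+1 < L -> adj i i.+1) -> adj w 0 ->
  ((forall i j, nth false s i -> nth false s j -> ~~ adj i j) <->
   nc s && ~~ (nth false s 0 && nth false s w)).
Proof.
move=> hs hw hst hcons hw0; split.
- move=> H; apply/andP; split.
  + apply/nc_nth => i; apply/negP => /andP [h1 h2].
    have hi := nth_true_lt h2; rewrite hs in hi.
    by have := H _ _ h1 h2; rewrite hcons.
  + apply/negP => /andP [h0 hw']; by have := H _ _ hw' h0; rewrite hw0.
- move=> /andP [/nc_nth hnc hw'] i j hi hj; apply/negP => hadj.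
  case/or4P: (hst _ _ hadj).
  + by move/eqP => e; subst j; have := hnc i; rewrite hi hj.
  + by move/eqP => e; subst i; have := hnc j; rewrite hi hj.
  + by case/andP => /eqP e1 /eqP e2; subst i j; move: hw'; rewrite hi hj.
  + by case/andP => /eqP e1 /eqP e2; subst i j; move: hw'; rewrite hi hj.
Qed.

Lemma coef_count L w (adj : nat -> nat -> bool) k :
  0 < w < L ->
  (forall i j, adj i j -> [|| j == i.+1, i == j.+1, (i == 0) && (j == w) | (i == w) && (j == 0)]) ->
  (forall i, i.+1 < L -> adj i i.+1) -> adj w 0 ->
  indep_coef (fun a b : 'I_L => adj a b) k =
  count (fun s => nc s && ~~ (nth false s 0 && nth false s w) && (count id s == k)) (allbits L).
Proof.
move=> hw hst hcons hw0.
rewrite /indep_coef -card_set_bits; apply: eq_card => A; rewrite !inE card_bits.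
congr (_ && _).
have e1 := indep_iff adj A.
have e2 := struct_iff (size_bits A) hw hst hcons hw0.
apply/idP/idP => h.
- by apply/e2.1/e1.
- by apply/e1.2/e2.
Qed.


Lemma succ_mod i m : i < m -> i.+1 %% m = if i.+1 == m then 0 else i.+1.
Proof.
move=> h; case: eqP => [->|ne]; first by rewrite modnn.
by rewrite modn_small //; lia.
Qed.

Lemma cyc_struct m i j : 2 < m -> cycle_adj m i j ->
  [|| j == i.+1, i == j.+1, (i == 0) && (j == m.-1) | (i == m.-1) && (j == 0)].
Proof.
move=> hm /and3P [hi hj /orP [] /eqP e].
- rewrite succ_mod // in e; move: e; case: eqP => hh e; subst j.
  + by apply/or4P; apply: Or44; apply/andP; split; apply/eqP; lia.
  + by rewrite eqxx.
- rewrite succ_mod // in e; move: e; case: eqP => hh e; subst i.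
  + by apply/or4P; apply: Or43; apply/andP; split; apply/eqP; lia.
  + by rewrite eqxx orbT.
Qed.

Lemma cyc_cons m i : i.+1 < m -> cycle_adj m i i.+1.
Proof. move=> h; rewrite /cycle_adj succ_mod; last lia. rewrite ifN; last lia. rewrite eqxx /=; apply/andP; split; lia. Qed.

Lemma cyc_wrap m : 0 < m -> cycle_adj m m.-1 0.
Proof.
move=> h; rewrite /cycle_adj prednK // modnn eqxx /= andbT.
apply/andP; split; lia.
Qed.

Lemma tad_struct m i j : 2 < m -> tadpole_adj m 3 i j ->
  [|| j == i.+1, i == j.+1, (i == 0) && (j == m.-1) | (i == m.-1) && (j == 0)].
Proof.
move=> hm /orP [h|]; first exact: cyc_struct.
case/and5P => _ _ _ _ /orP [] ->; by rewrite ?orbT.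
Qed.

Lemma tad_cons m i : 2 < m -> i.+1 < m + 3 -> tadpole_adj m 3 i i.+1.
Proof.
move=> hm h; rewrite /tadpole_adj.
case: (ltnP i.+1 m) => hi; first by rewrite cyc_cons.
apply/orP; right; rewrite eqxx /=.
apply/and5P; split; lia.
Qed.

Lemma cycle_coef m k : 5 <= m -> indep_coef (cycle_graph m) k = cc m k.
Proof.
move=> hm.
have [n hn] : exists n, m = n.+3 by exists (m - 3); lia.
rewrite (@coef_count m m.-1 (cycle_adj m)); first last.
- apply: cyc_wrap; lia.
- move=> i; apply: cyc_cons.
- move=> i j; apply: cyc_struct; lia.
- apply/andP; split; lia.
rewrite (eq_in_count (a2 := fun s => cyc s && (count id s == k))); last first.
  move=> s; rewrite mem_allbits => /eqP hs.
  by rewrite /cyc nth0 -nth_last hs.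
rewrite hn C_count /cc /pp /rr.
case: k => [|k]; rewrite !N_bin; [congr (_ + _) | congr (_ + _)]; congr 'C(_, _); lia.
Qed.

Definition TT m k := cc m k + (if k is k'.+1 then 2 * cc m k' + pp m k' + (if k' is k''.+1 then pp m k'' else 0) else 0).

Lemma tad_coef m k : 5 <= m -> indep_coef (tadpole_graph m 3) k = TT m k.
Proof.
move=> hm.
have [n hn] : exists n, m = n.+3 by exists (m - 3); lia.
rewrite (@coef_count (m + 3) m.-1 (tadpole_adj m 3)); first last.
- rewrite /tadpole_adj cyc_wrap //; lia.
- move=> i; apply: tad_cons; lia.
- move=> i j; apply: tad_struct; lia.
- apply/andP; split; lia.
have Cc : forall j, count (fun s => cyc s && (count id s == j)) (allbits n.+3) = cc m j.
  move=> j; rewrite C_count /cc /pp /rr hn.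
  case: j => [|j]; rewrite !N_bin; [congr (_ + _) | congr (_ + _)]; congr 'C(_, _); lia.
have Cn : forall j, count (fun s => cyc s && ~~ last false s && (count id s == j)) (allbits n.+3) = pp m j.
  by move=> j; rewrite Cn_count N_bin /pp hn; congr 'C(_, _); lia.
move: (hn) => hn'; subst m; rewrite /= in hn'.
rewrite T_count Cc /TT.
case: k => [|k].
  rewrite !(eq_count (a2 := pred0)); try by move=> s; rewrite andbF.
  by rewrite !count_pred0.
rewrite (eq_count (a2 := fun s => cyc s && (count id s == k))); last by move=> s; rewrite eqSS.
rewrite Cc.
rewrite (eq_count (a2 := fun s => cyc s && ~~ last false s && (count id s == k))); last by move=> s; rewrite eqSS.
rewrite Cn.
case: k => [|k].
  rewrite (eq_count (a2 := pred0)); last by move=> s; rewrite andbF.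
  rewrite count_pred0; lia.
rewrite (eq_count (a2 := fun s => cyc s && ~~ last false s && (count id s == k))); last by move=> s; rewrite !eqSS.
rewrite Cn; lia.
Qed.


Lemma unimodal_ext a b : a =1 b -> unimodal a -> unimodal b.
Proof. move=> e [k [h1 h2]]; exists k; split => i hi; rewrite -!e; auto. Qed.

Lemma is_mode_ext a b i : a =1 b -> is_mode a i -> is_mode b i.
Proof.
move=> e [h1 h2]; split; last by move=> j hj; rewrite -!e; auto.
by move: h1; case: (i) => [|i'] /=; rewrite -!e.
Qed.

Theorem proposition3p3 (m : nat) (hm : 5 <= m) :
  unimodal (indep_coef (tadpole_graph m 3)) /\
  exists i rho : nat,
    [/\ is_mode (indep_coef (tadpole_graph m 3)) i,
        is_mode (indep_coef (cycle_graph m)) rho &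
        rho <= i <= rho + 2].
Proof.
have eT : TT m =1 indep_coef (tadpole_graph m 3) by move=> k; rewrite tad_coef.
have eC : cc m =1 indep_coef (cycle_graph m) by move=> k; rewrite cycle_coef.
have [x [hx0 cstrict [cup cdown] [pup pdown] K]] := analytic hm.
have [y hy] : exists y, x = y.+1 by exists x.-1; lia.
subst x.
have Tup : forall k, k < y.+1 -> TT m k <= TT m k.+1.
  move=> [|k] hk; rewrite /TT.
    lia.
  have h1 := cup k.+1 hk.
  have h2 := cup k (ltnW hk).
  case: k hk h1 h2 => [|k] hk h1 h2.
    lia.
  have h3 := pup k.+1 hk.
  have h4 := pup k (ltnW hk).
  lia.
have Tstrict : TT m y < TT m y.+1.
  rewrite /TT.
  have h1 := cstrict. rewrite /= in h1.
  move: (cup) (pup) h1; clear.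
  case: y => [|y] cup pup h1; first lia.
  have h2 := cup y (ltnW (leqnn _)).
  move: cup pup h1 h2.
  case: y => [|y] cup pup h1 h2.
    have h3 := pup 0 (leqnn _). lia.
  have h3 := pup y.+1 (leqnn _).
  have h4 := pup y (ltnW (leqnn _)).
  lia.
have Tdown : forall k, y.+2 <= k -> TT m k.+1 <= TT m k.
  move=> [|k] hk; first lia.
  rewrite /TT.
  have h1 := cdown k.+1 ltac:(lia).
  have h2 := cdown k ltac:(lia).
  have h3 := pdown k ltac:(lia).
  case: k hk h1 h2 h3 => [|k] hk h1 h2 h3; first lia.
  case: (ltnP y.+1 k.+1) => hk2.
  - have h4 := pdown k hk2. lia.
  - have ek : k = y by lia. subst k. rewrite /= in K. lia.
split.
  apply: (unimodal_ext eT).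
  case: (ltnP (TT m y.+1) (TT m y.+2)) => hlt.
  - exists y.+2; split => i hi.
    + case: (ltnP i y.+1) => h; first exact: Tup.
      have -> : i = y.+1 by lia. exact: ltnW.
    + exact: Tdown.
  - exists y.+1; split => i hi; first exact: Tup.
    case: (ltnP i y.+2) => h; last exact: Tdown.
    by have -> : i = y.+1 by lia.
have hmC : is_mode (cc m) y.+1.
  by split => //; exact: cdown.
case: (ltnP (TT m y.+1) (TT m y.+2)) => hlt.
- exists y.+2, y.+1; split.
  + apply: (is_mode_ext eT); split => //; exact: Tdown.
  + exact: (is_mode_ext eC).
  + lia.
- exists y.+1, y.+1; split.
  + apply: (is_mode_ext eT); split => //.
    move=> j hj; case: (ltnP j y.+2) => h; last exact: Tdown.
    by have -> : j = y.+1 by lia.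
  + exact: (is_mode_ext eC).
  + lia.
Qed.
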